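(* Let $A$ be a subset of a group $G$. (a) $\operatorname{VC}^\ell_B(A)\leq\operatorname{VC}^\ell_G(A)$ for every $B\subseteq G$. (b) $\operatorname{VC}^\ell_G(A)-1\leq\dim_{\ell\mathrm{VC}}(A)\leq\operatorname{VC}^\ell_G(A)$. (c) $\operatorname{VC}^\ell_G(A)$ equals the dual VC-dimension of $\mathcal F^r_G(A)$; hence $\operatorname{VC}^\ell_G(A)<2\exp(\operatorname{VC}^r_G(A))$ and $\operatorname{VC}^r_G(A)<2\exp(\operatorname{VC}^\ell_G(A))$. (d) $\dim_{\ell\mathrm{VC}}(A)$ equals the dual VC-dimension of $\mathcal F^r_{A^{-1}}(A)$; hence $\dim_{\ell\mathrm{VC}}(A)<2\exp(\operatorname{VC}^r_{A^{-1}}(A))$ and $\operatorname{VC}^r_{A^{-1}}(A)<2\exp(\dim_{\ell\mathrm{VC}}(A))$. (e) The statements obtained from (a)–(d) by exchanging the roles of $\ell$ and $r$ throughout also hold.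
   Context: A set system $\mathcal F$ on $X$ shatters $Y\subseteq X$ if $\{Y\cap S:S\in\mathcal F\}$ is the power set of $Y$; $\operatorname{VC}(\mathcal F)$ is the maximum size of a finite shattered set ($\infty$ if unbounded). The dual system $\mathcal F^*$ is the set system on $\mathcal F$ consisting of the sets $\mathcal F_x=\{S\in\mathcal F:x\in S\}$ for $x\in\bigcup\mathcal F$; the dual VC-dimension of $\mathcal F$ is $\operatorname{VC}(\mathcal F^* )$. For $A,B\subseteq G$: $\mathcal F^\ell_B(A)=\{xA:x\in B\}$, $\mathcal F^r_B(A)=\{Ax:x\in B\}$, $\operatorname{VC}^\bullet_B(A)=\operatorname{VC}(\mathcal F^\bullet_B(A))$ for $\bullet\in\{\ell,r\}$. Sisask's variants: $\mathcal F^\ell(A|B)=\{xA\cap B:x\in BA^{-1}\}$, $\mathcal F^r(A|B)=\{Ax\cap B:x\in A^{-1}B\}$, $\dim_{\bullet\mathrm{VC}}(A|B)=\operatorname{VC}(\mathcal F^\bullet(A|B))$, $\dim_{\bullet\mathrm{VC}}(A)=\dim_{\bullet\mathrm{VC}}(A|A)$. $\exp$ is base $2$. *)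

(* Defs.v *)
From HB Require Import structures.
From mathcomp Require Import all_boot.
From mathcomp Require Import boolp classical_sets.
Set Implicit Arguments. Unset Strict Implicit. Unset Printing Implicit Defensive.
Local Open Scope classical_set_scope.

Definition shatters {X : Type} (F : set (set X)) (Y : set X) : Prop :=
  [set Y `&` S | S in F] = [set Z | Z `<=` Y].

(* VC_le F n  <->  VC(F) <= n  (in nat ∪ {∞}): every finite shattered set
   (presented as the range of an injection from 'I_k) has size <= n. *)
Definition VC_le {X : Type} (F : set (set X)) (n : nat) : Prop :=
  forall (k : nat) (f : 'I_k -> X), injective f -> shatters F (range f) -> (k <= n)%N.

(* VC(F) <= VC(F') in nat ∪ {∞} *)
Definition VC_leq {X Y : Type} (F : set (set X)) (F' : set (set Y)) : Prop :=
  forall n, VC_le F' n -> VC_le F n.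

Definition VC_eq {X Y : Type} (F : set (set X)) (F' : set (set Y)) : Prop :=
  VC_leq F F' /\ VC_leq F' F.

(* VC(F) - 1 <= VC(F') in nat ∪ {∞} *)
Definition VC_pred_leq {X Y : Type} (F : set (set X)) (F' : set (set Y)) : Prop :=
  forall n, VC_le F' n -> VC_le F n.+1.

(* VC(F) < 2 exp(VC(F')) = 2 * 2^VC(F'), whenever VC(F') is finite *)
Definition VC_lt_2exp {X Y : Type} (F : set (set X)) (F' : set (set Y)) : Prop :=
  forall n, VC_le F' n -> VC_le F (2 * 2 ^ n).-1.

Definition dual {X : Type} (F : set (set X)) : set (set (set X)) :=
  [set [set S | F S /\ S x] | x in \bigcup_(S in F) S].

Section GroupDefs.
Local Open Scope group_scope.
Variable G : groupType.

Definition lcoset (x : G) (A : set G) : set G := [set x * a | a in A].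
Definition rcoset (A : set G) (x : G) : set G := [set a * x | a in A].
Definition setinv (A : set G) : set G := [set a^-1 | a in A].
Definition setmul (A B : set G) : set G :=
  [set z | exists2 a, A a & exists2 b, B b & z = a * b].

Definition Fl (B A : set G) : set (set G) := [set lcoset x A | x in B].
Definition Fr (B A : set G) : set (set G) := [set rcoset A x | x in B].

Definition Fl_rel (A B : set G) : set (set G) :=
  [set lcoset x A `&` B | x in setmul B (setinv A)].
Definition Fr_rel (A B : set G) : set (set G) :=
  [set rcoset A x `&` B | x in setmul (setinv A) B].
End GroupDefs.

(* Main.v *)
From HB Require Import structures.
Require Import Defs.
From mathcomp Require Import all_boot.
From mathcomp Require Import boolp classical_sets.
Local Open Scope classical_set_scope.


Lemma shatters_rangeP {X I : Type} (F : set (set X)) (f : I -> X) :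
  injective f ->
  shatters F (range f) <-> forall P : I -> Prop, exists2 S, F S & forall i, S (f i) <-> P i.
Proof.
move=> finj; split.
- move=> sh P.
  have : [set Z | Z `<=` range f] [set f i | i in P].
    by move=> _ [i _ <-]; exists i.
  rewrite -sh => -[S FS eS]; exists S => // i.
  split.
  + move=> Sfi; have : (range f `&` S) (f i) by split => //; exists i.
    by rewrite eS => -[j Pj /finj <-].
  + move=> Pi; have : [set f i | i in P] (f i) by exists i.
    by rewrite -eS => -[].
- move=> H; apply/seteqP; split.
  + by move=> _ [S FS <-] x [].
  + move=> Z ZY.
    have [S FS eS] := H (fun i => Z (f i)).
    exists S => //; apply/seteqP; split.
    * by move=> _ [[i _ <-]] /eS.
    * move=> x Zx; have [i _ fx] := ZY x Zx; subst x.
      by split; [exists i | apply/eS].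
Qed.

Arguments shatters_rangeP {X I F f}.
Lemma shatters_sub {X : Type} (F : set (set X)) Y :
  shatters F Y -> forall y, Y y -> exists2 S, F S & Y `<=` S.
Proof.
move=> sh y Yy.
have : [set Z | Z `<=` Y] Y by [].
rewrite -sh => -[S FS eS]; exists S => // x Yx.
by move: Yx; rewrite -eS => -[].
Qed.

Lemma shatters_in {X : Type} (F : set (set X)) Y :
  shatters F Y -> exists2 S, F S & Y `<=` S.
Proof.
move=> sh.
have : [set Z | Z `<=` Y] Y by [].
rewrite -sh => -[S FS eS]; exists S => // x Yx.
by move: Yx; rewrite -eS => -[].
Qed.

Arguments shatters_in {X F Y}.
Lemma VC_le_fin {X : Type} (F : set (set X)) n (T : finType) (g : T -> X) :
  VC_le F n -> injective g -> shatters F (range g) -> (#|T| <= n)%N.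
Proof.
move=> hv ginj sh.
have := hv #|T| (fun i : 'I_#|T| => g (enum_val i)); apply.
  by move=> i j /ginj /enum_val_inj.
suff -> : range (fun i : 'I_#|T| => g (enum_val i)) = range g by [].
apply/seteqP; split; first by move=> _ [i _ <-]; exists (enum_val i).
by move=> _ [t _ <-]; exists (enum_rank t) => //=; rewrite enum_rankK.
Qed.

Arguments VC_le_fin {X F n T g}.
Definition BT n := {ffun 'I_n.+1 -> bool}.

Lemma card_BT n : #|{ffun 'I_n.+1 -> bool}| = (2 * 2 ^ n)%N.
Proof. by rewrite card_ffun card_bool card_ord expnS. Qed.

Lemma assouadA {X : Type} (F : set (set X)) n :
  VC_le F n -> VC_le (dual F) (2 * 2 ^ n).-1.
Proof.
move=> hv k f finj sh.
rewrite leqNgt; apply/negP => hk.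
have hk' : (#|{ffun 'I_n.+1 -> bool}| <= k)%N.
  by rewrite card_BT; move: hk; case: (2 * 2 ^ n)%N.
pose s (w : {ffun 'I_n.+1 -> bool}) := f (widen_ord hk' (enum_rank w)).
have sinj : injective s.
  by move=> w1 w2 /finj /(congr1 val) /= /val_inj /enum_rank_inj.
have [D0 dD0 sD0] := shatters_in sh.
have Fs : forall w, F (s w).
  move=> w; have : D0 (s w) by apply: sD0; exists (widen_ord hk' (enum_rank w)).
  by case: dD0 => y _ <- [].
have /choice [y hy] : forall j : 'I_n.+1, exists y : X, forall w, s w y <-> w j.
  move=> j.
  have [D dD eD] := (shatters_rangeP finj).1 sh
      (fun i => exists2 w, widen_ord hk' (enum_rank w) = i & w j).
  case: dD => y _ eDy; exists y => w.
  have := eD (widen_ord hk' (enum_rank w)); rewrite -eDy /= => e.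
  split.
  - move=> swy; have [] := e.1 (conj (Fs w) swy).
    by move=> w' /(congr1 val) /= /val_inj /enum_rank_inj ->.
  - by move=> wj; have [] := e.2 (ex_intro2 _ _ w erefl wj).
have yinj : injective y.
  move=> j1 j2 e; apply/eqP/negPn/negP => ne.
  have h1 : s [ffun i => i == j1] (y j1) by apply/(hy j1); rewrite ffunE.
  have := (hy j2 [ffun i => i == j1]).1; rewrite -e => /(_ h1).
  by rewrite ffunE eq_sym (negbTE ne).
have : (#|'I_n.+1| <= n)%N.
  apply: (VC_le_fin hv yinj); apply/(shatters_rangeP yinj) => P.
  exists (s [ffun i => `[< P i >]]) => // i.
  by rewrite hy ffunE; split => /asboolP.
by rewrite card_ord ltnn.
Qed.

Lemma assouadB {X : Type} (F : set (set X)) n :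
  VC_le (dual F) n -> VC_le F (2 * 2 ^ n).-1.
Proof.
move=> hv k f finj sh.
rewrite leqNgt; apply/negP => hk.
have hk' : (#|{ffun 'I_n.+1 -> bool}| <= k)%N.
  by rewrite card_BT; move: hk; case: (2 * 2 ^ n)%N.
pose p (w : {ffun 'I_n.+1 -> bool}) := f (widen_ord hk' (enum_rank w)).
have [S0 FS0 sS0] := shatters_in sh.
have pS0 : forall w, S0 (p w).
  by move=> w; apply: sS0; exists (widen_ord hk' (enum_rank w)).
have /choice [h hh] : forall j : 'I_n.+1, exists S : set X, F S /\ forall w, S (p w) <-> w j.
  move=> j.
  have [S FS eS] := (shatters_rangeP finj).1 sh
      (fun i => exists2 w, widen_ord hk' (enum_rank w) = i & w j).
  exists S; split => // w; rewrite eS; split.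
  - by move=> [w' /(congr1 val) /= /val_inj /enum_rank_inj ->].
  - by move=> wj; exists w.
have hinj : injective h.
  move=> j1 j2 e; apply/eqP/negPn/negP => ne.
  have h1 : h j1 (p [ffun i => i == j1]) by apply/(hh j1).2; rewrite ffunE.
  have := ((hh j2).2 [ffun i => i == j1]).1; rewrite -e => /(_ h1).
  by rewrite ffunE eq_sym (negbTE ne).
have : (#|'I_n.+1| <= n)%N.
  apply: (VC_le_fin hv hinj); apply/(shatters_rangeP hinj) => P.
  pose w := [ffun i => `[< P i >]].
  exists [set S | F S /\ S (p w)].
    by exists (p w) => //; exists S0.
  move=> i /=; rewrite (hh i).2 ffunE; split.
  - by move=> [_ /asboolP].
  - by move=> Pi; split; [case: (hh i) | apply/asboolP].
by rewrite card_ord ltnn.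
Qed.

Lemma lt2exp_of_eq {X Y : Type} (F : set (set X)) (F' : set (set Y)) :
  VC_eq F (dual F') -> VC_lt_2exp F F' /\ VC_lt_2exp F' F.
Proof.
move=> [h1 h2]; split => n hn.
- exact/h1/assouadA.
- exact/assouadB/h2.
Qed.

Arguments lt2exp_of_eq {X Y F F'}.

Lemma VC_leq_sub {X : Type} (F F' : set (set X)) : F `<=` F' -> VC_leq F F'.
Proof.
move=> sub n hv k f finj sh; apply: (hv _ _ finj).
apply/(shatters_rangeP finj) => P.
have [S FS eS] := (shatters_rangeP finj).1 sh P.
by exists S => //; apply: sub.
Qed.

Local Open Scope group_scope.

Lemma lcE {G : groupType} (x : G) (A : set G) (g : G) : lcoset x A g = A (x^-1 * g).
Proof.
rewrite propeqE; split.
- by case=> a Aa <-; rewrite mulKg.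
- by move=> h; exists (x^-1 * g) => //; rewrite mulVKg.
Qed.

Lemma rcE {G : groupType} (A : set G) (x g : G) : rcoset A x g = A (g * x^-1).
Proof.
rewrite propeqE; split.
- by case=> a Aa <-; rewrite mulgK.
- by move=> h; exists (g * x^-1) => //; rewrite mulgVK.
Qed.

Lemma rcVE {G : groupType} (A : set G) (x g : G) : rcoset A x^-1 g = A (g * x).
Proof. by rewrite rcE invgK. Qed.

Lemma partLa {G : groupType} (A : set G) (B : set G) : VC_leq (Fl B A) (Fl setT A).
Proof. by apply: VC_leq_sub => _ [x _ <-]; exists x. Qed.

Lemma partLb2 {G : groupType} (A : set G) : VC_leq (Fl_rel A A) (Fl setT A).
Proof.
move=> n hv k f finj sh; apply: (hv _ _ finj).
have [S0 [z0 _ <-] sub] := shatters_in sh.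
have Af : forall i, A (f i) by move=> i; have [] := sub (f i) (ex_intro2 _ _ i I erefl).
apply/(shatters_rangeP finj) => P.
have [S [z _ <-] eS] := (shatters_rangeP finj).1 sh P.
exists (lcoset z A); first by exists z.
move=> i; rewrite -eS /=; split; first by move=> h; split.
by case.
Qed.

Lemma partLb1 {G : groupType} (A : set G) : VC_pred_leq (Fl setT A) (Fl_rel A A).
Proof.
move=> n hv [//|k] f finj sh.
have [S0 [x0 _ <-] sub] := shatters_in sh.
have hx0 : forall i, A (x0^-1 * f i).
  by move=> i; rewrite -lcE; apply: sub; exists i.
pose g i := x0^-1 * f (lift ord0 i).
have ginj : injective g by move=> i j /mulgI /finj /lift_inj.
suff : (k <= n)%N by [].
apply: (hv _ g ginj); apply/(shatters_rangeP ginj) => P.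
have [S [z _ <-] eS] := (shatters_rangeP finj).1 sh
  (fun l => l = ord0 \/ exists2 i, l = lift ord0 i & P i).
exists (lcoset (x0^-1 * z) A `&` A).
  exists (x0^-1 * z) => //.
  exists (x0^-1 * f ord0) => //.
  exists ((z^-1 * f ord0)^-1).
    by exists (z^-1 * f ord0) => //; rewrite -lcE; apply/eS; left.
  by rewrite invgM invgK mulgA mulgK.
move=> i /=; rewrite lcE /g invgM invgK -mulgA mulVKg -(lcE z).
rewrite eS; split.
- case=> -[e|[j /lift_inj <- //]] _.
  by move: (neq_lift ord0 i); rewrite e eqxx.
- by move=> Pi; split; [right; exists i | exact: hx0].
Qed.

Lemma partLc {G : groupType} (A : set G) : VC_eq (Fl setT A) (dual (Fr setT A)).
Proof.
split.
- move=> n hv [//|k] f finj sh.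
  pose h i := rcoset A (f i)^-1.
  have [S0 [z0 _ <-] sub] := shatters_in sh.
  have Aa : A (z0^-1 * f ord0) by rewrite -lcE; apply: sub; exists ord0.
  have shP := (shatters_rangeP finj).1 sh.
  have hinj : injective h.
    move=> i j e; apply/eqP/negPn/negP => ne.
    have [S [z _ <-] eS] := shP (fun l => l = i).
    have : h i z^-1 by rewrite /h rcVE -lcE eS.
    by rewrite e /h rcVE -lcE eS => ej; rewrite ej eqxx in ne.
  apply: (hv _ h hinj); apply/(shatters_rangeP hinj) => P.
  have [S [z _ <-] eS] := shP P.
  exists [set S | Fr setT A S /\ S z^-1].
    exists z^-1 => //.
    exists (rcoset A (z * (z0^-1 * f ord0))^-1); first by exists (z * (z0^-1 * f ord0))^-1.
    by rewrite rcVE mulKg.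
  move=> i /=; rewrite /h rcVE -lcE eS; split; first by case.
  by move=> Pi; split=> //; exists (f i)^-1.
- move=> n hv k f finj sh.
  have [D0 [y0 _ <-] sub] := shatters_in sh.
  have /choice [x hx] : forall i, exists x, f i = rcoset A x.
    by move=> i; have [[x _ e] _] := sub (f i) (ex_intro2 _ _ i I erefl); exists x.
  pose g i := (x i)^-1.
  have ginj : injective g.
    by move=> i j /invg_inj e; apply: finj; rewrite !hx e.
  apply: (hv _ g ginj); apply/(shatters_rangeP ginj) => P.
  have [D [y _ <-] eD] := (shatters_rangeP finj).1 sh P.
  exists (lcoset y^-1 A); first by exists y^-1.
  move=> i; rewrite lcE invgK -eD /= hx rcE; split; last by case.
  by move=> h; split=> //; exists (x i).
Qed.

Lemma partLd {G : groupType} (A : set G) : VC_eq (Fl_rel A A) (dual (Fr (setinv A) A)).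
Proof.
split.
- move=> n hv [//|k] f finj sh.
  pose h i := rcoset A (f i)^-1.
  have [S0 [z0 _ <-] sub] := shatters_in sh.
  have Af : forall i, A (f i) by move=> i; have [] := sub (f i) (ex_intro2 _ _ i I erefl).
  have shP := (shatters_rangeP finj).1 sh.
  have hinj : injective h.
    move=> i j e; apply/eqP/negPn/negP => ne.
    have [S [z _ <-] eS] := shP (fun l => l = i).
    have : h i z^-1 by rewrite /h rcVE -lcE; have [] := (eS i).2 erefl.
    rewrite e /h rcVE -lcE => hj.
    by have := (eS j).1 (conj hj (Af j)) => ej; rewrite ej eqxx in ne.
  apply: (hv _ h hinj); apply/(shatters_rangeP hinj) => P.
  have [S [z [a Aa [b [c Ac <-] ->]] <-] eS] := shP P.
  exists [set S | Fr (setinv A) A S /\ S (a * c^-1)^-1].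
    exists (a * c^-1)^-1 => //.
    exists (rcoset A a^-1); first by exists a^-1 => //; exists a.
    by rewrite rcVE invgM invgK mulgVK.
  move=> i /=; rewrite /h rcVE -lcE -eS; split.
  + by case=> _ h1; split.
  + by case=> h1 _; split => //; exists (f i)^-1 => //; exists (f i).
- move=> n hv k f finj sh.
  have [D0 [y0 _ <-] sub] := shatters_in sh.
  have /choice [x hx] : forall i, exists x, A (x^-1) /\ f i = rcoset A x.
    move=> i; have [[x [c Ac <-] e] _] := sub (f i) (ex_intro2 _ _ i I erefl).
    by exists c^-1; rewrite invgK.
  pose g i := (x i)^-1.
  have ginj : injective g.
    move=> i j /invg_inj e; apply: finj.
    by rewrite (hx i).2 (hx j).2 e.
  apply: (hv _ g ginj); apply/(shatters_rangeP ginj) => P.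
  have [D [y [S [c [d Ad <-] <-] Sy] <-] eD] := (shatters_rangeP finj).1 sh P.
  move: Sy; rewrite rcVE => Ae.
  exists (lcoset y^-1 A `&` A).
    exists y^-1 => //.
    exists d => //; exists (y * d)^-1; first by exists (y * d).
    by rewrite invgM mulVKg.
  move=> i; rewrite /= lcE invgK -eD /= (hx i).2 rcE; split.
  + by case=> h _; split => //; exists (x i) => //; exists (x i)^-1; [case: (hx i) | rewrite invgK].
  + by case=> _ h; split => //; case: (hx i).
Qed.


Definition gop (G : groupType) : Type := G.
HB.instance Definition _ (G : groupType) := Choice.copy (gop G) G.
Definition opmul (G : groupType) (x y : gop G) : gop G := (y : G) * x.
Lemma op_mulgA (G : groupType) : associative (@opmul G).
Proof. by move=> x y z; rewrite /opmul mulgA. Qed.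
Lemma op_mul1g (G : groupType) : left_id (1 : G) (@opmul G).
Proof. by move=> x; rewrite /opmul mulg1. Qed.
Lemma op_mulg1 (G : groupType) : right_id (1 : G) (@opmul G).
Proof. by move=> x; rewrite /opmul mul1g. Qed.
Lemma op_mulVg (G : groupType) : left_inverse (1 : G) (@inv G) (@opmul G).
Proof. by move=> x; rewrite /opmul mulgV. Qed.
Lemma op_mulgV (G : groupType) : right_inverse (1 : G) (@inv G) (@opmul G).
Proof. by move=> x; rewrite /opmul mulVg. Qed.
HB.instance Definition _ (G : groupType) := isGroup.Build (gop G) (@op_mulgA G) (@op_mul1g G) (@op_mulg1 G) (@op_mulVg G) (@op_mulgV G).

Lemma Fr_relE (G : groupType) (A : set G) : Fr_rel A A = Fl_rel (G := gop G) A A.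
Proof.
rewrite /Fr_rel /Fl_rel; congr image.
apply/seteqP; split.
- by move=> z [a Aa [b Ab ->]]; exists b => //; exists a.
- by move=> z [a Aa [b Ab ->]]; exists b => //; exists a.
Qed.
Local Close Scope group_scope.

Theorem propositionA1 (G : groupType) (A : set G) :
  (* (a) *)
  (forall B : set G, VC_leq (Fl B A) (Fl setT A)) /\
  (* (b) *)
  (VC_pred_leq (Fl setT A) (Fl_rel A A) /\ VC_leq (Fl_rel A A) (Fl setT A)) /\
  (* (c) *)
  (VC_eq (Fl setT A) (dual (Fr setT A)) /\
   VC_lt_2exp (Fl setT A) (Fr setT A) /\ VC_lt_2exp (Fr setT A) (Fl setT A)) /\
  (* (d) *)
  (VC_eq (Fl_rel A A) (dual (Fr (setinv A) A)) /\
   VC_lt_2exp (Fl_rel A A) (Fr (setinv A) A) /\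
   VC_lt_2exp (Fr (setinv A) A) (Fl_rel A A)) /\
  (* (e) : (a)-(d) with l and r exchanged *)
  ((forall B : set G, VC_leq (Fr B A) (Fr setT A)) /\
   (VC_pred_leq (Fr setT A) (Fr_rel A A) /\ VC_leq (Fr_rel A A) (Fr setT A)) /\
   (VC_eq (Fr setT A) (dual (Fl setT A)) /\
    VC_lt_2exp (Fr setT A) (Fl setT A) /\ VC_lt_2exp (Fl setT A) (Fr setT A)) /\
   (VC_eq (Fr_rel A A) (dual (Fl (setinv A) A)) /\
    VC_lt_2exp (Fr_rel A A) (Fl (setinv A) A) /\
    VC_lt_2exp (Fl (setinv A) A) (Fr_rel A A))).
Proof.
have [cl1 cl2] := lt2exp_of_eq (partLc A).
have [dl1 dl2] := lt2exp_of_eq (partLd A).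
have [cr1 cr2] := lt2exp_of_eq (partLc (G := gop G) A).
have [dr1 dr2] := lt2exp_of_eq (partLd (G := gop G) A).
split; first exact: partLa.
split; first by split; [exact: partLb1 | exact: partLb2].
split; first by split; [exact: partLc | split].
split; first by split; [exact: partLd | split].
split; first exact: (partLa (G := gop G) A).
split; first by rewrite Fr_relE; split; [exact: (partLb1 (G := gop G) A) | exact: (partLb2 (G := gop G) A)].
split; first by split; [exact: (partLc (G := gop G) A) | split].
by rewrite Fr_relE; split; [exact: (partLd (G := gop G) A) | split].
Qed.
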